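(* Let $A,B$ be real symmetric $4\times 4$ matrices defining quadrics $\mathcal A: X^TAX=0$, $\mathcal B: X^TBX=0$ in $\mathbb{PR}^3$ with $f(\lambda)=\det(\lambda A-B)$ not identically zero. If $f(\lambda)=0$ has two identical pairs of complex conjugate roots with Segre characteristic $[(11)(11)]$, then the only possible index sequence is $\langle 2\rangle$, and in this case the QSIC comprises two non-intersecting real lines and two non-intersecting imaginary lines.
   Context: $X=(x,y,z,w)^T$ homogeneous coordinates; QSIC $=\mathcal A\cap\mathcal B$ (over $\mathbb C$). One may take $A$ nonsingular. Segre characteristic $[(11)(11)]$: $A^{-1}B$ has two distinct eigenvalues (here complex conjugate), each with two $1\times1$ Jordan blocks. $\mathrm{Id}(\lambda)$ = number of positive eigenvalues of $\lambda A-B$; when $f$ has no real root, the index sequence is $\langle s_0\rangle$ with $s_0$ the constant value of $\mathrm{Id}$ on $\mathbb R$. A line is real if it has infinitely many real points, imaginary otherwise. *)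

(* Defs.v *)
From HB Require Import structures.
From mathcomp Require Import all_boot all_order all_algebra.
From mathcomp Require Import complex.
Set Implicit Arguments. Unset Strict Implicit. Unset Printing Implicit Defensive.
Import Order.TTheory GRing.Theory Num.Theory.
Local Open Scope ring_scope.

Section QSIC.
Variable R : rcfType.
Local Notation C := (complex R).

Definition cmx (m n : nat) (M : 'M[R]_(m, n)) : 'M[C]_(m, n) :=
  map_mx (fun x : R => Complex x 0) M.

Definition pencil_poly (A B : 'M[R]_4) : {poly R} :=
  \det (\matrix_(i, j) ('X * (A i j)%:P - (B i j)%:P)).

Definition two_conj_double_roots (A B : 'M[R]_4) : Prop :=
  exists mu : C, Im mu != 0 /\
    map_poly (fun x : R => Complex x 0) (pencil_poly A B) =
    (Complex (lead_coef (pencil_poly A B)) 0)%:P *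
      (('X - mu%:P) ^+ 2 * ('X - (conjc mu)%:P) ^+ 2).

(* Segre characteristic [(11)(11)] with complex conjugate eigenvalues:
   A is nonsingular, A^{-1}B has exactly the two eigenvalues mu, conj mu
   (each of algebraic multiplicity 2) and each has geometric multiplicity 2,
   i.e. two 1x1 Jordan blocks per eigenvalue. *)
Definition segre_11_11_conj (A B : 'M[R]_4) : Prop :=
  A \in unitmx /\
  exists mu : C, Im mu != 0 /\
    let M := invmx (cmx A) *m cmx B in
    [/\ char_poly M = ('X - mu%:P) ^+ 2 * ('X - (conjc mu)%:P) ^+ 2,
        \rank (mu%:M - M) = 2%N & \rank ((conjc mu)%:M - M) = 2%N].

Definition pos_eig_count (M : 'M[R]_4) (k : nat) : Prop :=
  exists s : seq R, char_poly M = \prod_(x <- s) ('X - x%:P) /\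
                    count (fun x => 0 < x) s = k.

Definition on_quadric (A : 'M[R]_4) (X : 'rV[C]_4) : Prop :=
  (X *m cmx A *m X^T) 0 0 = 0.

Definition on_qsic (A B : 'M[R]_4) (X : 'rV[C]_4) : Prop :=
  on_quadric A X /\ on_quadric B X.

(* a projective line of PC^3, given by two spanning rows *)
Definition is_line (L : 'M[C]_(2, 4)) : Prop := \rank L = 2%N.

(* a line is real if it contains infinitely many (pairwise distinct
   projective) real points *)
Definition real_line (L : 'M[C]_(2, 4)) : Prop :=
  forall n : nat, exists f : 'I_n -> 'rV[R]_4,
    (forall i, f i != 0 /\ (cmx (f i) <= L)%MS) /\
    (forall i j, i != j -> \rank (col_mx (f i) (f j)) = 2%N).

Definition lines_disjoint (L1 L2 : 'M[C]_(2, 4)) : Prop :=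
  forall X : 'rV[C]_4, (X <= L1)%MS -> (X <= L2)%MS -> X = 0.

End QSIC.

(* Main.v *)
Require Import Defs.
From HB Require Import structures.
From mathcomp Require Import all_boot all_order all_algebra.
From mathcomp Require Import complex.
From mathcomp Require Import ring.
Import Order.TTheory GRing.Theory Num.Theory.
Set Implicit Arguments. Unset Strict Implicit. Unset Printing Implicit Defensive.
Local Open Scope ring_scope.

Lemma split_e0 : split (ord0 : 'I_(1+1)) = inl ord0.
Proof. by case: splitP => i; rewrite ?ord1 //= => /esym/eqP; rewrite addn_eq0. Qed.
Lemma split_e1 : split (lift ord0 ord0 : 'I_(1+1)) = inr ord0.
Proof. by case: splitP => i; rewrite ?ord1 //= ; case: i => -[]. Qed.

Lemma mul2 (F : pzRingType) n (z : 'rV[F]_2) (u v : 'rV[F]_n) :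
  z *m (col_mx u v : 'M_(1+1, n)) = z 0 0 *: u + z 0 1 *: v.
Proof.
apply/rowP => j; rewrite !mxE big_ord_recl big_ord1 !mxE split_e0 split_e1.
by congr (z 0 _ * _ + z 0 _ * _); apply/val_inj.
Qed.

Lemma span2 (F : fieldType) n (u v x : 'rV[F]_n) :
  (x <= (col_mx u v : 'M_(1+1,n)))%MS <-> exists a b, x = a *: u + b *: v.
Proof.
split.
  move=> /submxP [z ->]; exists (z 0 0), (z 0 1); exact: mul2.
move=> [a [b ->]]; apply: addmx_sub; apply: scalemx_sub.
  by rewrite -addsmxE addsmxSl.
by rewrite -addsmxE addsmxSr.
Qed.

Lemma freeP (F : fieldType) m n (M : 'M[F]_(m, n)) :
  (forall z : 'rV_m, z *m M = 0 -> z = 0) -> row_free M.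
Proof.
move=> H; rewrite -kermx_eq0; apply/eqP/row_matrixP => i; rewrite row0.
by apply: H; rewrite -row_mul mulmx_ker row0.
Qed.

Definition indep2 (F : fieldType) n (u v : 'rV[F]_n) :=
  forall a b, a *: u + b *: v = 0 -> a = 0 /\ b = 0.

Lemma indep2_rank (F : fieldType) n (u v : 'rV[F]_n) :
  indep2 u v -> \rank (col_mx u v : 'M_(1+1,n)) = 2%N.
Proof.
move=> H; apply/eqP; apply: (@freeP F 2 n (col_mx u v)) => z.
rewrite mul2 => /H [h0 h1]; apply/rowP => i; rewrite mxE.
by case: i => -[|[|//]] Hi; [rewrite -h0 | rewrite -h1]; congr (z 0 _); apply/val_inj.
Qed.

Lemma mul_sum4 (F : pzRingType) n (z : 'rV[F]_4) (e : 'I_4 -> 'rV[F]_n) :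
  z *m (\matrix_(i < 4) e i) = z 0 0 *: e 0 + z 0 1 *: e 1 + z 0 2%:R *: e 2%:R + z 0 3%:R *: e 3%:R.
Proof.
rewrite mulmx_sum_row !big_ord_recl big_ord0 addr0 !rowK !addrA.
have -> : ord0 = 0 :> 'I_4 by apply/val_inj.
have -> : lift ord0 ord0 = 1 :> 'I_4 by apply/val_inj.
have -> : lift ord0 (lift ord0 ord0) = 2%:R :> 'I_4 by apply/val_inj.
by have -> : lift ord0 (lift ord0 (lift ord0 ord0)) = 3%:R :> 'I_4 by apply/val_inj.
Qed.

Definition indep4 (F : fieldType) n (e1 e2 e3 e4 : 'rV[F]_n) :=
  forall a b c d, a *: e1 + b *: e2 + c *: e3 + d *: e4 = 0 ->
    [/\ a = 0, b = 0, c = 0 & d = 0].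

Lemma span4 (F : fieldType) (e1 e2 e3 e4 : 'rV[F]_4) :
  indep4 e1 e2 e3 e4 -> forall X : 'rV_4,
  exists a b c d, X = a *: e1 + b *: e2 + c *: e3 + d *: e4.
Proof.
move=> H X.
pose e (i : 'I_4) := nth 0 [:: e1; e2; e3; e4] i.
pose P := \matrix_(i < 4) e i.
have Pu : P \in unitmx.
  rewrite -row_free_unit; apply: freeP => z; rewrite mul_sum4 /= => /H [h0 h1 h2 h3].
  apply/rowP => i; rewrite mxE.
  by case: i => -[|[|[|[|//]]]] Hi; [rewrite -h0|rewrite -h1|rewrite -h2|rewrite -h3];
    congr (z 0 _); apply/val_inj.
exists ((X *m invmx P) 0 0), ((X *m invmx P) 0 1), ((X *m invmx P) 0 2%:R),
  ((X *m invmx P) 0 3%:R).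
by rewrite -{1}(mulmxKV Pu X) mul_sum4.
Qed.

Lemma indep4_coef (F : fieldType) n (e1 e2 e3 e4 : 'rV[F]_n) :
  indep4 e1 e2 e3 e4 -> forall a b c d a' b' c' d',
  a *: e1 + b *: e2 + c *: e3 + d *: e4 = a' *: e1 + b' *: e2 + c' *: e3 + d' *: e4 ->
  [/\ a = a', b = b', c = c' & d = d'].
Proof.
move=> H a b c d a' b' c' d' E.
have [] := H (a - a') (b - b') (c - c') (d - d').
  apply/rowP => j; move/rowP: E => /(_ j); rewrite !mxE => /eqP; rewrite -subr_eq0 => /eqP E.
  by rewrite -E; ring.
by move=> /eqP; rewrite subr_eq0 => /eqP -> /eqP; rewrite subr_eq0 => /eqP ->
  /eqP; rewrite subr_eq0 => /eqP -> /eqP; rewrite subr_eq0 => /eqP ->.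
Qed.

Definition cj (R : rcfType) m n (M : 'M[R[i]]_(m, n)) : 'M[R[i]]_(m, n) :=
  map_mx (@conjc R) M.

Definition bil (R : rcfType) (Q : 'M[R[i]]_4) (u v : 'rV[R[i]]_4) : R[i] :=
  (u *m Q *m v^T) 0 0.

Section Bil.
Lemma bilDl (R : rcfType) (Q : 'M[R[i]]_4) u v w : bil Q (u + v) w = bil Q u w + bil Q v w.
Proof. by rewrite /bil !mulmxDl mxE. Qed.
Lemma bilZl (R : rcfType) (Q : 'M[R[i]]_4) a u w : bil Q (a *: u) w = a * bil Q u w.
Proof. by rewrite /bil -!scalemxAl mxE. Qed.
Lemma bilDr (R : rcfType) (Q : 'M[R[i]]_4) u v w : bil Q u (v + w) = bil Q u v + bil Q u w.
Proof. by rewrite /bil linearD /= !mulmxDr mxE. Qed.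
Lemma bilZr (R : rcfType) (Q : 'M[R[i]]_4) a u w : bil Q u (a *: w) = a * bil Q u w.
Proof. by rewrite /bil linearZ /= -!scalemxAr mxE. Qed.
Lemma bil_sym (R : rcfType) (Q : 'M[R[i]]_4) u v : Q^T = Q -> bil Q u v = bil Q v u.
Proof.
move=> sQ; rewrite /bil.
have h (M : 'M[R[i]]_1) : M 0 0 = M^T 0 0 by rewrite mxE.
by rewrite h !trmx_mul trmxK sQ mulmxA.
Qed.
End Bil.

Lemma cmxE (R : rcfType) m n (M : 'M[R]_(m, n)) : cmx M = map_mx (real_complex R) M.
Proof. by apply/matrixP => i j; rewrite !mxE. Qed.

Lemma cj_cmx (R : rcfType) m n (M : 'M[R]_(m, n)) : cj (cmx M) = cmx M.
Proof. by apply/matrixP => i j; rewrite !mxE /= oppr0. Qed.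

Lemma cjK (R : rcfType) m n (M : 'M[R[i]]_(m, n)) : cj (cj M) = M.
Proof. by apply/matrixP => i j; rewrite !mxE conjcK. Qed.

Lemma cjD (R : rcfType) m n (M N : 'M[R[i]]_(m, n)) : cj (M + N) = cj M + cj N.
Proof. exact: map_mxD. Qed.
Lemma cjZ (R : rcfType) m n a (M : 'M[R[i]]_(m, n)) : cj (a *: M) = conjc a *: cj M.
Proof. exact: map_mxZ. Qed.
Lemma cjM (R : rcfType) m n p (M : 'M[R[i]]_(m, n)) (N : 'M[R[i]]_(n, p)) :
  cj (M *m N) = cj M *m cj N.
Proof. exact: map_mxM. Qed.
Lemma cj0 (R : rcfType) m n : cj (0 : 'M[R[i]]_(m, n)) = 0.
Proof. exact: map_mx0. Qed.

Lemma bil_cj (R : rcfType) (Q : 'M[R]_4) u v :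
  bil (cmx Q) (cj u) (cj v) = conjc (bil (cmx Q) u v).
Proof.
rewrite /bil -[in LHS](cj_cmx Q) /cj map_trmx -!map_mxM.
by rewrite mxE.
Qed.

Lemma cmx_sym (R : rcfType) (Q : 'M[R]_4) : Q^T = Q -> (cmx Q)^T = cmx Q.
Proof. by move=> sQ; rewrite !cmxE map_trmx sQ. Qed.

Definition inE (R : rcfType) (A B : 'M[R]_4) (mu : R[i]) (u : 'rV[R[i]]_4) :=
  u *m cmx B = mu *: (u *m cmx A).

Lemma inE_lin (R : rcfType) (A B : 'M[R]_4) mu u v a b :
  inE A B mu u -> inE A B mu v -> inE A B mu (a *: u + b *: v).
Proof.
rewrite /inE => hu hv; rewrite !mulmxDl -!scalemxAl hu hv.
by rewrite !scalerA mulrC [b * _]mulrC -!scalerA scalerDr.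
Qed.

Lemma inE_cj (R : rcfType) (A B : 'M[R]_4) mu u :
  inE A B mu u -> inE A B (conjc mu) (cj u).
Proof.
rewrite /inE => hu; rewrite -(cj_cmx A) -(cj_cmx B) -!cjM hu.
by rewrite cjZ.
Qed.

Lemma bilB (R : rcfType) (A B : 'M[R]_4) mu u w :
  inE A B mu u -> bil (cmx B) u w = mu * bil (cmx A) u w.
Proof. by rewrite /bil /inE => ->; rewrite -scalemxAl mxE. Qed.

Lemma orthE (R : rcfType) (A B : 'M[R]_4) mu nu u w :
  A^T = A -> B^T = B -> mu != nu -> inE A B mu u -> inE A B nu w ->
  bil (cmx A) u w = 0.
Proof.
move=> sA sB mn hu hw.
have := bilB w hu; rewrite bil_sym ?cmx_sym // (bilB u hw) (bil_sym _ _ (cmx_sym sA)).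
move/eqP; rewrite -subr_eq0 -mulrBl mulf_eq0 subr_eq0 eq_sym (negbTE mn) /=.
by move/eqP.
Qed.

Lemma cmx_unit (R : rcfType) (A : 'M[R]_4) : A \in unitmx -> cmx A \in unitmx.
Proof. by rewrite cmxE map_unitmx. Qed.

Lemma inE_zero (R : rcfType) (A B : 'M[R]_4) mu nu u :
  A \in unitmx -> mu != nu -> inE A B mu u -> inE A B nu u -> u = 0.
Proof.
move=> uA mn hu hv; move: hu; rewrite /inE hv => /eqP; rewrite -subr_eq0 -scalerBl.
rewrite scaler_eq0 subr_eq0 eq_sym (negbTE mn) /= => /eqP h.
by rewrite -(mulmxK (cmx_unit uA) u) h mul0mx.
Qed.

Lemma indep4_of2 (R : rcfType) (A B : 'M[R]_4) mu f1 f2 :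
  A \in unitmx -> mu != conjc mu -> inE A B mu f1 -> inE A B mu f2 ->
  indep2 f1 f2 -> indep4 f1 f2 (cj f1) (cj f2).
Proof.
move=> uA mn h1 h2 i2 a b c d H.
set u := a *: f1 + b *: f2. set w := c *: cj f1 + d *: cj f2.
have hu : inE A B mu u by exact: inE_lin.
have hw : inE A B (conjc mu) w by apply: inE_lin; exact: inE_cj.
have hw' : inE A B (conjc mu) u.
  have -> : u = - w by apply/eqP; rewrite -addr_eq0; apply/eqP; rewrite /u /w addrA.
  by move: hw; rewrite /inE !mulNmx => ->; rewrite scalerN.
have u0 : u = 0 := inE_zero uA mn hu hw'.
have [a0 b0] := i2 _ _ u0.
have w0 : w = 0 by move: H; rewrite -addrA -/w -/u u0 add0r.
have := i2 (conjc c) (conjc d); rewrite -(cjK f1) -(cjK f2) -!cjZ -cjD -/w w0 cj0.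
case=> // /eqP; rewrite conjc_eq0 => /eqP c0 /eqP; rewrite conjc_eq0 => /eqP d0.
by [].
Qed.

Lemma ND (R : rcfType) (A B : 'M[R]_4) mu f1 f2 u :
  A^T = A -> B^T = B -> A \in unitmx -> mu != conjc mu ->
  inE A B mu f1 -> inE A B mu f2 -> indep4 f1 f2 (cj f1) (cj f2) ->
  inE A B mu u -> bil (cmx A) u f1 = 0 -> bil (cmx A) u f2 = 0 -> u = 0.
Proof.
move=> sA sB uA mn h1 h2 i4 hu b1 b2.
have hX : forall X, bil (cmx A) u X = 0.
  move=> X; have [a [b [c [d ->]]]] := span4 i4 X.
  rewrite !bilDr !bilZr b1 b2 !(orthE sA sB mn hu (inE_cj h1)) !(orthE sA sB mn hu (inE_cj h2)).
  by rewrite !mulr0 !addr0.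
have h0 : u *m cmx A = 0.
  apply/rowP => j; have := hX (delta_mx 0 j); rewrite /bil trmx_delta -colE !mxE => ->.
  by [].
by rewrite -(mulmxK (cmx_unit uA) u) h0 mul0mx.
Qed.

Lemma iso2 (C : numClosedFieldType) (p r t : C) :
  (forall a b, a * p + b * r = 0 -> a * r + b * t = 0 -> a = 0 /\ b = 0) ->
  exists a1 b1 a2 b2,
    [/\ a1 ^+ 2 * p + 2%:R * a1 * b1 * r + b1 ^+ 2 * t = 0,
        a2 ^+ 2 * p + 2%:R * a2 * b2 * r + b2 ^+ 2 * t = 0 &
        a1 * b2 - a2 * b1 != 0].
Proof.
move=> H.
have two0 : (2%:R : C) != 0 by rewrite pnatr_eq0.
have [p0|pn0] := eqVneq p 0.
  have rn0 : r != 0.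
    apply/eqP => r0; have [] := H 1 0; rewrite ?p0 ?r0; try ring.
    by move/eqP; rewrite oner_eq0.
  exists 1, 0, t, (- (2%:R * r)); split; rewrite ?p0; try ring.
  by rewrite mulr0 subr0 mul1r oppr_eq0 mulf_neq0.
set s := sqrtC (r ^+ 2 - p * t).
have s2 : s ^+ 2 = r ^+ 2 - p * t by rewrite sqrtCK.
have sn0 : s != 0.
  apply/eqP => s0; move: s2; rewrite s0 expr0n /= => /eqP; rewrite eq_sym subr_eq0 => /eqP e.
  have [] := H r (- p); first ring.
    by rewrite -expr2 e; ring.
  by move=> _ /eqP; rewrite oppr_eq0 (negbTE pn0).
exists (s - r), p, (- s - r), p; split.
- transitivity (p * (s ^+ 2 - r ^+ 2 + p * t)); first ring.
  by rewrite s2; ring.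
- transitivity (p * (s ^+ 2 - r ^+ 2 + p * t)); first ring.
  by rewrite s2; ring.
have -> : (s - r) * p - (- s - r) * p = 2%:R * s * p by ring.
by rewrite !mulf_neq0.
Qed.

Lemma base_E (R : rcfType) (A B : 'M[R]_4) mu :
  A \in unitmx -> \rank (mu%:M - invmx (cmx A) *m cmx B) = 2%N ->
  exists v1 v2, [/\ inE A B mu v1, inE A B mu v2 & indep2 v1 v2].
Proof.
move=> uA rk.
set K := mu%:M - invmx (cmx A) *m cmx B.
have rkK : \rank (kermx K) = 2%N by rewrite mxrank_ker rk.
move: (row_base (kermx K)) (row_base_free (kermx K)) (eq_row_base (kermx K)).
rewrite rkK => Bm Bfree Beq.
have wK : forall i, row i Bm *m K = 0.
  by move=> i; apply/eqP; rewrite -sub_kermx -Beq row_sub.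
have hE : forall i, inE A B mu (row i Bm *m invmx (cmx A)).
  move=> i; rewrite /inE mulmxKV ?cmx_unit //.
  move: (wK i); rewrite /K mulmxBr mul_mx_scalar mulmxA => /eqP; rewrite subr_eq0 => /eqP.
  by move=> ->.
exists (row 0 Bm *m invmx (cmx A)), (row 1 Bm *m invmx (cmx A)); split => // a b.
rewrite !scalemxAl -mulmxDl => /(congr1 (mulmx^~ (cmx A))).
rewrite mulmxKV ?cmx_unit // mul0mx => h.
have : (\row_j (if j == 0 then a else b)) *m Bm = 0.
  rewrite mulmx_sum_row big_ord_recl big_ord1 !mxE /= -h.
  by congr (_ *: row _ _ + _ *: row _ _); apply/val_inj.
move/eqP; rewrite mulmx_free_eq0 // => /eqP /rowP h2.
by split; [have := h2 0 | have := h2 1]; rewrite !mxE.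
Qed.

Lemma lin2_bil (R : rcfType) (Q : 'M[R]_4) a b c d u v :
  Q^T = Q ->
  bil (cmx Q) (a *: u + b *: v) (c *: u + d *: v) =
  a * c * bil (cmx Q) u u + (a * d + b * c) * bil (cmx Q) u v + b * d * bil (cmx Q) v v.
Proof.
move=> sQ; rewrite !bilDl !bilDr !bilZl !bilZr (bil_sym v u (cmx_sym sQ)); ring.
Qed.

Lemma iso_E (R : rcfType) (A B : 'M[R]_4) mu :
  A^T = A -> B^T = B -> A \in unitmx -> mu != conjc mu ->
  \rank (mu%:M - invmx (cmx A) *m cmx B) = 2%N ->
  exists e1 e2, [/\ inE A B mu e1, inE A B mu e2, indep4 e1 e2 (cj e1) (cj e2) &
     [/\ bil (cmx A) e1 e1 = 0, bil (cmx A) e2 e2 = 0 & bil (cmx A) e1 e2 != 0]].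
Proof.
move=> sA sB uA mn rk.
have [v1 [v2 [h1 h2 i2]]] := base_E uA rk.
have i4 := indep4_of2 uA mn h1 h2 i2.
set p := bil (cmx A) v1 v1; set r := bil (cmx A) v1 v2; set t := bil (cmx A) v2 v2.
have ndv : forall a b, a * p + b * r = 0 -> a * r + b * t = 0 -> a = 0 /\ b = 0.
  move=> a b e1 e2; apply: i2.
  apply: (ND sA sB uA mn h1 h2 i4); first exact: inE_lin.
    by rewrite bilDl !bilZl (bil_sym v2 v1 (cmx_sym sA)).
  by rewrite bilDl !bilZl.
have [a1 [b1 [a2 [b2 [q1 q2 dn]]]]] := iso2 ndv.
have he1 : inE A B mu (a1 *: v1 + b1 *: v2) by exact: inE_lin.
have he2 : inE A B mu (a2 *: v1 + b2 *: v2) by exact: inE_lin.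
have ie : indep2 (a1 *: v1 + b1 *: v2) (a2 *: v1 + b2 *: v2).
  move=> x y hxy.
  have [hx hy] : x * a1 + y * a2 = 0 /\ x * b1 + y * b2 = 0.
    apply: i2; rewrite -hxy; apply/rowP => j; rewrite !mxE; ring.
  split.
    apply/eqP; rewrite -(mulIr_eq0 _ (rregP dn)).
    have -> : x * (a1 * b2 - a2 * b1) = b2 * (x * a1 + y * a2) - a2 * (x * b1 + y * b2) by ring.
    by rewrite hx hy !mulr0 subr0.
  apply/eqP; rewrite -(mulIr_eq0 _ (rregP dn)).
  have -> : y * (a1 * b2 - a2 * b1) = a1 * (x * b1 + y * b2) - b1 * (x * a1 + y * a2) by ring.
  by rewrite hx hy !mulr0 subr0.
exists (a1 *: v1 + b1 *: v2), (a2 *: v1 + b2 *: v2).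
have z1 : bil (cmx A) (a1 *: v1 + b1 *: v2) (a1 *: v1 + b1 *: v2) = 0.
  by rewrite lin2_bil // -/p -/r -/t -q1; ring.
have z2 : bil (cmx A) (a2 *: v1 + b2 *: v2) (a2 *: v1 + b2 *: v2) = 0.
  by rewrite lin2_bil // -/p -/r -/t -q2; ring.
split => //; first exact: (indep4_of2 uA mn he1 he2 ie).
split => //; apply/eqP => z12.
have := ND sA sB uA mn he1 he2 (indep4_of2 uA mn he1 he2 ie) he1 z1 z12.
move=> e0; have [] := ie 1 0; first by rewrite e0 scale1r scale0r addr0.
by move/eqP; rewrite oner_eq0.
Qed.

Lemma line_mem (F : fieldType) n (f1 f2 f3 f4 : 'rV[F]_n) a b c d :
  indep4 f1 f2 f3 f4 ->
  (((a *: f1 + b *: f2 + c *: f3 + d *: f4)%R <= (col_mx f1 f3 : 'M_(1+1,n)))%MS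
    <-> b = 0 /\ d = 0).
Proof.
move=> H; split.
  move=> hX; have [x [y e]] := proj1 (span2 _ _ _) hX.
  have [] := indep4_coef H (a := a) (b := b) (c := c) (d := d) (a' := x) (b' := 0) (c' := y) (d' := 0).
    by rewrite e !scale0r !addr0.
  by [].
move=> [-> ->]; apply: (proj2 (span2 _ _ _)); exists a, c; by rewrite !scale0r !addr0.
Qed.

Lemma indep4_p1 (F : fieldType) n (f1 f2 f3 f4 : 'rV[F]_n) :
  indep4 f1 f2 f3 f4 -> indep4 f2 f1 f4 f3.
Proof.
move=> H a b c d e; have [] := H b a d c.
  by rewrite -e; apply/rowP => j; rewrite !mxE; ring.
by [].
Qed.
Lemma indep4_p2 (F : fieldType) n (f1 f2 f3 f4 : 'rV[F]_n) :
  indep4 f1 f2 f3 f4 -> indep4 f1 f2 f4 f3.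
Proof.
move=> H a b c d e; have [] := H a b d c.
  by rewrite -e; apply/rowP => j; rewrite !mxE; ring.
by [].
Qed.
Lemma indep4_p3 (F : fieldType) n (f1 f2 f3 f4 : 'rV[F]_n) :
  indep4 f1 f2 f3 f4 -> indep4 f2 f1 f3 f4.
Proof.
move=> H a b c d e; have [] := H b a c d.
  by rewrite -e; apply/rowP => j; rewrite !mxE; ring.
by [].
Qed.

Lemma vec_perm (F : comPzRingType) n (f1 f2 f3 f4 : 'rV[F]_n) a b c d :
  [/\ a *: f1 + b *: f2 + c *: f3 + d *: f4 = b *: f2 + a *: f1 + d *: f4 + c *: f3,
      a *: f1 + b *: f2 + c *: f3 + d *: f4 = a *: f1 + b *: f2 + d *: f4 + c *: f3 &
      a *: f1 + b *: f2 + c *: f3 + d *: f4 = b *: f2 + a *: f1 + c *: f3 + d *: f4].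
Proof. by split; apply/rowP => j; rewrite !mxE; ring. Qed.

Lemma two_line (F : fieldType) n (f1 f2 f3 f4 : 'rV[F]_n) :
  indep4 f1 f2 f3 f4 -> \rank (col_mx f1 f3 : 'M_(1+1,n)) = 2%N.
Proof.
move=> H; apply: indep2_rank => x y e.
have [] := H x 0 y 0; last by [].
by rewrite !scale0r !addr0.
Qed.

Lemma qsicE (R : rcfType) (A B : 'M[R]_4) X :
  on_qsic A B X <-> bil (cmx A) X X = 0 /\ bil (cmx B) X X = 0.
Proof. exact: iff_refl. Qed.

Lemma mu_conj_neq (R : rcfType) (mu : R[i]) : Im mu != 0 -> mu != conjc mu.
Proof.
move=> hb; apply: contraNneq hb => e; apply/eqP/Creal_ImP.
by rewrite CrealE; apply/eqP; exact: (esym e).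
Qed.

Lemma qsic_lines (R : rcfType) (A B : 'M[R]_4) mu e1 e2 :
  A^T = A -> B^T = B -> A \in unitmx -> mu != conjc mu ->
  inE A B mu e1 -> inE A B mu e2 -> indep4 e1 e2 (cj e1) (cj e2) ->
  bil (cmx A) e1 e1 = 0 -> bil (cmx A) e2 e2 = 0 -> bil (cmx A) e1 e2 != 0 ->
  forall X, on_qsic A B X <->
   [\/ (X <= (col_mx e1 (cj e1) : 'M_(1+1,4)))%MS, (X <= (col_mx e2 (cj e2) : 'M_(1+1,4)))%MS,
       (X <= (col_mx e1 (cj e2) : 'M_(1+1,4)))%MS | (X <= (col_mx e2 (cj e1) : 'M_(1+1,4)))%MS].
Proof.
move=> sA sB uA mn h1 h2 i4 z1 z2 al X.
have [a [b [c [d ->]]]] := span4 i4 X.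
set e3 := cj e1; set e4 := cj e2.
have h3 : inE A B (conjc mu) e3 by exact: inE_cj.
have h4 : inE A B (conjc mu) e4 by exact: inE_cj.
have z3 : bil (cmx A) e3 e3 = 0 by rewrite /e3 bil_cj z1 rmorph0.
have z4 : bil (cmx A) e4 e4 = 0 by rewrite /e4 bil_cj z2 rmorph0.
have al' : bil (cmx A) e3 e4 != 0 by rewrite /e3 /e4 bil_cj conjc_eq0.
set u := a *: e1 + b *: e2; set w := c *: e3 + d *: e4.
have eX : a *: e1 + b *: e2 + c *: e3 + d *: e4 = u + w by rewrite /u /w addrA.
have hu : inE A B mu u by exact: inE_lin.
have hw : inE A B (conjc mu) w by exact: inE_lin.
have huw : bil (cmx A) u w = 0 := orthE sA sB mn hu hw.
have hwu : bil (cmx A) w u = 0.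
  by apply: (orthE sA sB _ hw hu); rewrite eq_sym.
have Pu : bil (cmx A) u u = 2%:R * a * b * bil (cmx A) e1 e2.
  by rewrite /u lin2_bil // z1 z2; ring.
have Pw : bil (cmx A) w w = 2%:R * c * d * bil (cmx A) e3 e4.
  by rewrite /w lin2_bil // z3 z4; ring.
have QA : bil (cmx A) (u + w) (u + w) = bil (cmx A) u u + bil (cmx A) w w.
  by rewrite bilDl (bilDr _ u) (bilDr _ w) huw hwu addr0 add0r.
have QB : bil (cmx B) (u + w) (u + w) = mu * bil (cmx A) u u + conjc mu * bil (cmx A) w w.
  by rewrite bilDl (bilB _ hu) (bilB _ hw) (bilDr _ u) (bilDr _ w) huw hwu addr0 add0r.
have two0 : (2%:R : R[i]) != 0 by rewrite pnatr_eq0.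
have key : on_qsic A B (a *: e1 + b *: e2 + c *: e3 + d *: e4) <->
    ((a = 0 \/ b = 0) /\ (c = 0 \/ d = 0)).
  rewrite eX qsicE QA QB; split.
    move=> [e5 e6].
    have ew : bil (cmx A) w w = 0.
      have : (conjc mu - mu) * bil (cmx A) w w = 0.
        have -> : (conjc mu - mu) * bil (cmx A) w w =
          (mu * bil (cmx A) u u + conjc mu * bil (cmx A) w w) -
          mu * (bil (cmx A) u u + bil (cmx A) w w) by ring.
        by rewrite e6 e5 mulr0 subrr.
      by move/eqP; rewrite mulf_eq0 subr_eq0 eq_sym (negbTE mn) /= => /eqP.
    have eu : bil (cmx A) u u = 0 by move: e5; rewrite ew addr0.
    move: eu ew; rewrite Pu Pw => /eqP; rewrite !mulf_eq0 (negbTE two0) (negbTE al) orbF /=.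
    move=> hab /eqP; rewrite !mulf_eq0 (negbTE two0) (negbTE al') orbF /= => hcd.
    by split; [move: hab | move: hcd] => /orP [/eqP ->|/eqP ->]; by [left|right].
  move=> [hab hcd].
  have eu : bil (cmx A) u u = 0 by rewrite Pu; case: hab => ->; ring.
  have ew : bil (cmx A) w w = 0 by rewrite Pw; case: hcd => ->; ring.
  by rewrite eu ew !mulr0 addr0.
rewrite key.
have [q1 q2 q3] := vec_perm e1 e2 e3 e4 a b c d.
have m1 := line_mem a b c d i4.
have m2 : ((a *: e1 + b *: e2 + c *: e3 + d *: e4)%R <= (col_mx e2 e4 : 'M_(1+1,4)))%MS
   <-> a = 0 /\ c = 0 by rewrite q1; exact: line_mem (indep4_p1 i4).
have m3 : ((a *: e1 + b *: e2 + c *: e3 + d *: e4)%R <= (col_mx e1 e4 : 'M_(1+1,4)))%MS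
   <-> b = 0 /\ c = 0 by rewrite q2; exact: line_mem (indep4_p2 i4).
have m4 : ((a *: e1 + b *: e2 + c *: e3 + d *: e4)%R <= (col_mx e2 e3 : 'M_(1+1,4)))%MS
   <-> a = 0 /\ d = 0 by rewrite q3; exact: line_mem (indep4_p3 i4).
split.
  move=> [[a0|b0] [c0|d0]].
  - by apply: Or42; apply: (proj2 m2).
  - by apply: Or44; apply: (proj2 m4).
  - by apply: Or43; apply: (proj2 m3).
  - by apply: Or41; apply: (proj2 m1).
case=> H; [have := proj1 m1 H | have := proj1 m2 H | have := proj1 m3 H | have := proj1 m4 H];
  by case=> -> ->; split; by [left|right].
Qed.

Lemma cmx_eq0 (R : rcfType) m n (M : 'M[R]_(m, n)) : cmx M = 0 -> M = 0.
Proof.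
move/matrixP => h; apply/matrixP => i j; have := h i j; rewrite !mxE.
by case.
Qed.

Definition rp (R : rcfType) (x : 'rV[R[i]]_4) : 'rV[R]_4 := map_mx (@complex.Re R) x.

Lemma cmx_rp (R : rcfType) (x : 'rV[R[i]]_4) : cmx (rp (x + cj x)) = x + cj x.
Proof.
apply/rowP => j; rewrite !mxE; case: (x 0 j) => a b /=.
by congr Complex; rewrite subrr.
Qed.

Lemma disj (R : rcfType) (f1 f2 f3 f4 : 'rV[R[i]]_4) :
  indep4 f1 f2 f3 f4 -> lines_disjoint (col_mx f1 f3) (col_mx f2 f4).
Proof.
move=> H X; have [a [b [c [d eX]]]] := span4 H X; rewrite eX => s1 s2.
have [b0 d0] := proj1 (line_mem a b c d H) s1.
have [q1 _ _] := vec_perm f1 f2 f3 f4 a b c d.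
move: s2; rewrite q1 => s2.
have [a0 c0] := proj1 (line_mem b a d c (indep4_p1 H)) s2.
by rewrite a0 b0 c0 d0 !scale0r !addr0.
Qed.

Lemma nonreal_L (R : rcfType) (f1 f2 : 'rV[R[i]]_4) :
  indep4 f1 f2 (cj f1) (cj f2) -> ~ real_line (col_mx f1 (cj f2)).
Proof.
move=> H /(_ 1%N) [f [hf _]]; have [fn0 fs] := hf ord0.
have [x [y ex]] := proj1 (span2 _ _ _) fs.
have hc : cj (cmx (f ord0)) = cmx (f ord0) by rewrite cj_cmx.
move: hc; rewrite {1}ex cjD !cjZ cjK => hc.
have eq : x *: f1 + 0 *: f2 + 0 *: cj f1 + y *: cj f2 =
    0 *: f1 + conjc y *: f2 + conjc x *: cj f1 + 0 *: cj f2.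
  rewrite !scale0r !addr0 !add0r -ex -hc.
  by apply/rowP => j; rewrite !mxE; ring.
have [x0 _ _ y0] := indep4_coef H eq.
move/eqP: fn0; apply; apply: cmx_eq0.
by rewrite ex x0 y0 !scale0r addr0.
Qed.

Lemma real_L (R : rcfType) (e1 e2 : 'rV[R[i]]_4) :
  indep4 e1 e2 (cj e1) (cj e2) -> real_line (col_mx e1 (cj e1)).
Proof.
move=> H n.
pose c (k : nat) : R[i] := Complex 1 k%:R.
have cn0 : forall k, c k != 0.
  by move=> k; apply/eqP => -[] /eqP; rewrite oner_eq0.
have emb : forall k, cmx (rp (c k *: e1 + cj (c k *: e1))) = c k *: e1 + conjc (c k) *: cj e1.
  by move=> k; rewrite cmx_rp cjZ.
exists (fun k : 'I_n => rp (c k *: e1 + cj (c k *: e1))); split.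
  move=> k; split.
    apply/eqP => f0; have := congr1 (@cmx R 1 4) f0; rewrite emb.
    rewrite (_ : cmx 0 = 0); last by apply/rowP => j; rewrite !mxE.
    move=> h; have [] := H (c k) 0 (conjc (c k)) 0.
      by rewrite !scale0r !addr0.
    by move=> /eqP; rewrite (negbTE (cn0 k)).
  by rewrite emb; apply: (proj2 (span2 _ _ _)); exists (c k), (conjc (c k)).
move=> k l kl.
rewrite -(mxrank_map (real_complex R)) map_col_mx -!cmxE !emb.
apply: indep2_rank => x y hxy.
have eq : (x * c k + y * c l) *: e1 + 0 *: e2 + (x * conjc (c k) + y * conjc (c l)) *: cj e1
   + 0 *: cj e2 = 0.
  by rewrite -hxy; apply/rowP => j; rewrite !mxE; ring.
have [h1 _ h3 _] := H _ _ _ _ eq.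
have D : c l * conjc (c k) - conjc (c l) * c k != 0.
  rewrite /c; simpc; apply/eqP => -[] _ /eqP.
  rewrite -mulr2n mulrn_eq0 /= addrC subr_eq0 eqr_nat.
  by apply/negP; rewrite eq_sym; move: kl; apply: contra => /eqP e; apply/eqP/val_inj.
have y0 : y = 0.
  apply/eqP; rewrite -(mulIr_eq0 _ (rregP D)).
  have -> : y * (c l * conjc (c k) - conjc (c l) * c k) =
     conjc (c k) * (x * c k + y * c l) - c k * (x * conjc (c k) + y * conjc (c l)) by ring.
  by rewrite h1 h3 !mulr0 subr0.
split => //; move: h1; rewrite y0 mul0r addr0 => /eqP; rewrite mulf_eq0 (negbTE (cn0 k)) orbF.
by move/eqP.
Qed.

Lemma size_ie4 : size (index_enum 'I_4) = 4%N.
Proof. by rewrite [index_enum _]unlock -enumT size_enum_ord. Qed.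

Lemma char_poly_sim (F : fieldType) n (P D : 'M[F]_n) :
  P \in unitmx -> char_poly (invmx P *m D *m P) = char_poly D.
Proof.
move=> uP; rewrite /char_poly /char_poly_mx.
set Qi := map_mx (@polyC F) (invmx P); set Q := map_mx (@polyC F) P.
have QiQ : Qi *m Q = 1%:M by rewrite -map_mxM mulVmx // map_mx1.
have -> : 'X%:M - map_mx (@polyC F) (invmx P *m D *m P) =
    Qi *m ('X%:M - map_mx (@polyC F) D) *m Q.
  rewrite mulmxBr mulmxBl !map_mxM -/Qi -/Q; congr (_ - _).
  by rewrite scalar_mxC -mulmxA QiQ mulmx1.
rewrite !det_mulmx mulrC mulrA -det_mulmx.
by rewrite [Q *m Qi]mulmx1C // det1 mul1r.
Qed.

Lemma rank_diag_le (F : fieldType) n (v : 'rV[F]_n) :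
  (\rank (diag_mx v) <= count (fun i : 'I_n => (v 0 i != 0)%R) (index_enum 'I_n))%N.
Proof.
rewrite -sum1_count big_mkcond /= diag_mx_sum_delta.
apply: (big_rec2 (fun (M : 'M[F]_n) (r : nat) => \rank M <= r)%N).
  by rewrite mxrank0.
move=> i M r _ hr.
apply: leq_trans (mxrankS (addmx_sub_adds (submx_refl (v 0 i *: delta_mx i i)) (submx_refl M))) _.
apply: leq_trans (mxrank_adds_leqif _ _) _.
apply: leq_add => //.
have [->|vn0] := eqVneq (v 0 i) 0; first by rewrite scale0r mxrank0.
by rewrite (eqmx_scale _ vn0) mxrank_delta.
Qed.

Lemma count_bound (C : numClosedFieldType) (d : 'rV[C]_4) (W : 'M[C]_(2,4)) :
  \rank W = 2%N ->
  (forall y : 'rV_4, (y <= W)%MS -> \sum_i d 0 i * (y 0 i * (y 0 i)^*) = 0) ->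
  (2 <= count (fun i : 'I_4 => ~~ (0 < d 0 i)%R) (index_enum 'I_4))%N.
Proof.
move=> rW H.
set Dn := diag_mx (\row_i (if 0 < d 0 i then 0 else 1) : 'rV[C]_4).
have hk : (W :&: kermx Dn)%MS = 0.
  apply/eqP; rewrite -submx0; apply/rV_subP => y.
  rewrite sub_capmx => /andP [yW yK]; rewrite submx0; apply/eqP.
  have yD : forall i, ~~ (0 < d 0 i) -> y 0 i = 0.
    move=> i hi; move: yK; rewrite sub_kermx mul_mx_diag => /eqP /matrixP /(_ 0 i).
    by rewrite !mxE (negbTE hi) mulr1.
  have ge : forall i, true -> 0 <= d 0 i * (y 0 i * (y 0 i)^*).
    move=> i _; have [hi|hi] := boolP (0 < d 0 i).
      by apply: mulr_ge0; [exact: ltW | exact: mul_conjC_ge0].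
    by rewrite yD // mul0r mulr0.
  have each := psumr_eq0P ge (H y yW).
  apply/rowP => i; rewrite mxE; have [hi|hi] := boolP (0 < d 0 i); last by rewrite yD.
  have := each i isT; move/eqP; rewrite mulf_eq0 (gt_eqF hi) /= mul_conjC_eq0.
  by move/eqP.
have rk : \rank (W *m Dn) = 2%N.
  by have := mxrank_mul_ker W Dn; rewrite hk mxrank0 addn0 rW.
have h1 := rank_diag_le (\row_i (if 0 < d 0 i then 0 else 1) : 'rV[C]_4).
have h2 := mxrankM_maxr W Dn.
have := leq_trans h2 h1; rewrite rk => h3; apply: leq_trans h3 _.
rewrite leq_eqVlt; apply/orP; left; apply/eqP; apply: eq_count => i.
by rewrite mxE; case: (0 < d 0 i); rewrite ?eqxx ?oner_eq0.
Qed.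

Lemma diag_form (R : rcfType) (y : 'rV[R[i]]_4) (d : 'rV[R[i]]_4) :
  (y *m diag_mx d *m (cj y)^T) 0 0 = \sum_i d 0 i * (y 0 i * (y 0 i)^*).
Proof.
rewrite mul_mx_diag !mxE; apply: eq_bigr => i _; rewrite !mxE.
by rewrite mulrAC mulrC.
Qed.

Lemma index2 (R : rcfType) (A B : 'M[R]_4) mu e1 e2 (l : R) :
  A^T = A -> B^T = B -> A \in unitmx -> mu != conjc mu ->
  inE A B mu e1 -> inE A B mu e2 -> indep4 e1 e2 (cj e1) (cj e2) ->
  bil (cmx A) e1 e1 = 0 -> bil (cmx A) e2 e2 = 0 ->
  pos_eig_count (l *: A - B) 2.
Proof.
move=> sA sB uA mn h1 h2 i4 z1 z2.
set S := l *: A - B.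
have sS : S^T = S by rewrite /S linearB linearZ /= sA sB.
have cS : cmx S = (l%:C)%C *: cmx A - cmx B by rewrite !cmxE map_mxB map_mxZ.
set H := cmx S.
have bilS : forall u v, bil H u v = (l%:C)%C * bil (cmx A) u v - bil (cmx B) u v.
  by move=> u v; rewrite /H cS /bil mulmxBr mulmxBl -scalemxAr -scalemxAl !mxE.
set e3 := cj e1; set e4 := cj e2.
have h3 : inE A B (conjc mu) e3 by exact: inE_cj.
have h4 : inE A B (conjc mu) e4 by exact: inE_cj.
have lmu : (l%:C)%C - mu != 0.
  rewrite subr_eq0; apply: contra mn => /eqP <-; by rewrite conjc_real.
have lmu' : (l%:C)%C - conjc mu != 0.
  rewrite subr_eq0; apply: contra mn => /eqP e.
  have em : mu = (l%:C)%C by rewrite -(conjcK mu) -e conjc_real.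
  by rewrite em conjc_real.
have Hu : H \in unitmx.
  rewrite -row_free_unit; apply: freeP => x hx.
  have [a [b [c [d ex]]]] := span4 i4 x.
  set u := a *: e1 + b *: e2; set w := c *: e3 + d *: e4.
  have hu : inE A B mu u by exact: inE_lin.
  have hw : inE A B (conjc mu) w by exact: inE_lin.
  have : (((l%:C)%C - mu) *: u + ((l%:C)%C - conjc mu) *: w) *m cmx A = 0.
    have exw : x = u + w by rewrite ex /u /w addrA.
    rewrite -hx exw /H cS mulmxBr -scalemxAr (mulmxDl u w (cmx A)) (mulmxDl u w (cmx B)) hu hw.
    rewrite (mulmxDl ((_ - mu) *: u)) -!scalemxAl.
    by apply/rowP => j; rewrite !mxE; ring.
  move=> /(congr1 (mulmx^~ (invmx (cmx A)))); rewrite mulmxK ?cmx_unit // mul0mx => e0.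
  have [ha hb hc hd] : [/\ ((l%:C)%C - mu) * a = 0, ((l%:C)%C - mu) * b = 0,
      ((l%:C)%C - conjc mu) * c = 0 & ((l%:C)%C - conjc mu) * d = 0].
    apply: i4; rewrite -e0 /u /w; apply/rowP => j; rewrite !mxE; ring.
  move: ha hb hc hd => /eqP; rewrite mulf_eq0 (negbTE lmu) => /eqP a0.
  move=> /eqP; rewrite mulf_eq0 (negbTE lmu) => /eqP b0.
  move=> /eqP; rewrite mulf_eq0 (negbTE lmu') => /eqP c0.
  move=> /eqP; rewrite mulf_eq0 (negbTE lmu') => /eqP d0.
  by rewrite ex a0 b0 c0 d0 !scale0r !addr0.
have Hsym : H \is symmetricmx.
  apply/is_hermitianmxP; rewrite expr0 scale1r; apply/matrixP => i j.
  have eA : A j i = A i j by have := congr1 (fun M : 'M[R]_4 => M i j) sA; rewrite mxE.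
  have eB : B j i = B i j by have := congr1 (fun M : 'M[R]_4 => M i j) sB; rewrite mxE.
  by rewrite !mxE /= eA eB.
have Hreal : H \is a realmx.
  by apply/mxOverP => i j; rewrite mxE complex_real.
have Hh : H \is hermsymmx := realsym_hermsym Hsym Hreal.
have /orthomx_spectralP HE := hermitian_normalmx Hh.
set P := spectralmx H in HE; set d := spectral_diag H in HE.
have Pun : P \is unitarymx := spectral_unitarymx H.
have Pu : P \in unitmx := spectral_unit H.
have dreal : forall i, d 0 i \is Num.real.
  by move=> i; have /mxOverP := hermitian_spectral_diag_real Hh; apply.
have dIm : forall i, complex.Im (d 0 i) = 0.
  by move=> i; have := RIm_real (dreal i); case.
exists [seq complex.Re (d 0 i) | i <- index_enum 'I_4]; split.
  apply: (@map_poly_inj _ _ (real_complex R)).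
  rewrite map_char_poly -cmxE -/S -/H HE char_poly_sim // char_poly_trig ?diag_mx_is_trig //.
  rewrite rmorph_prod big_map; apply: eq_bigr => i _.
  by rewrite rmorphB /= map_polyX map_polyC /= RRe_real // mxE eqxx mulr1n.
rewrite count_map.
set pos := fun i : 'I_4 => (0 < d 0 i)%R.
have ec : count (preim (fun i => complex.Re (d 0 i)) (fun x => 0 < x)) (index_enum 'I_4)
    = count pos (index_enum 'I_4).
  by apply: eq_count => i /=; rewrite /pos ltcE dIm /= eqxx.
rewrite ec.
have dn0 : forall i, d 0 i != 0.
  move=> i; have := Hu; rewrite unitmxE unitfE HE !det_mulmx det_inv det_diag => hd.
  apply: contraNneq hd => e; by rewrite (bigD1 i) //= e mul0r mulr0 mul0r.
have b11 : bil H e1 e1 = 0 by rewrite bilS (bilB _ h1) z1 !mulr0 subrr.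
have b13 : bil H e1 e3 = 0.
  by rewrite bilS (bilB _ h1) (orthE sA sB mn h1 h3) !mulr0 subrr.
have z3 : bil (cmx A) e3 e3 = 0 by rewrite /e3 bil_cj z1 rmorph0.
have b33 : bil H e3 e3 = 0 by rewrite bilS (bilB _ h3) z3 !mulr0 subrr.
set W := (col_mx e1 e3 : 'M_(1+1,4)) *m invmx P.
have rW : \rank W = 2%N.
  by rewrite mxrankMfree ?(two_line i4) // row_free_unit unitmx_inv.
have cjP : (cj (invmx P))^T = P.
  rewrite (invmx_unitary Pun); apply/matrixP => i j; rewrite !mxE.
  exact: conjCK.
have hW : forall y : 'rV_4, (y <= W)%MS -> \sum_i d 0 i * (y 0 i * (y 0 i)^*) = 0.
  move=> y /submxP [z ->]; rewrite -diag_form.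
  have xs : (z *m col_mx e1 e3 <= (col_mx e1 e3 : 'M_(1+1,4)))%MS by exact: submxMl.
  have [a [c ex]] := proj1 (span2 _ _ _) xs.
  rewrite /W mulmxA cjM trmx_mul cjP ex mulmxA.
  have -> : (a *: e1 + c *: e3) *m invmx P *m diag_mx d *m P =
      (a *: e1 + c *: e3) *m H by rewrite HE !mulmxA.
  rewrite -/(bil H _ _) cjD !cjZ /e3 cjK addrC -/e3.
  rewrite /H lin2_bil // -/H b11 b33 (@bil_sym _ H e3 e1 (cmx_sym sS)) b13.
  by rewrite !mulr0 !addr0.
have hWn : forall y : 'rV_4, (y <= W)%MS -> \sum_i (- d) 0 i * (y 0 i * (y 0 i)^*) = 0.
  move=> y hy; rewrite (eq_bigr (fun i => - (d 0 i * (y 0 i * (y 0 i)^*)))).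
    by rewrite sumrN hW ?oppr0.
  by move=> i _; rewrite mxE mulNr.
have c1 : (2 <= count (predC pos) (index_enum 'I_4))%N by exact: (count_bound rW hW).
have c2 := count_bound rW hWn.
have c3 : (count (fun i : 'I_4 => ~~ (0 < (- d) 0 i)%R) (index_enum 'I_4) <= count pos (index_enum 'I_4))%N.
  apply: sub_count => i /=; rewrite mxE oppr_gt0 /pos => h.
  have := dn0 i; rewrite (real_neqr_lt (dreal i) (real0 _)) (negbTE h) /=.
  by [].
have c4 := count_predC pos (index_enum 'I_4); rewrite size_ie4 in c4.
have c5 := leq_trans c2 c3.
apply/eqP; rewrite eqn_leq c5 andbT.
by rewrite -(leq_add2r (count (predC pos) (index_enum 'I_4))) c4 (leq_add2l 2 2).
Qed.

Unset Implicit Arguments.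

Theorem theorem20 (R : rcfType) (A B : 'M[R]_4) :
  A^T = A -> B^T = B ->
  pencil_poly A B != 0 ->
  two_conj_double_roots A B ->
  segre_11_11_conj A B ->
  (* index sequence <2>: Id(lambda) = 2 for every real lambda *)
  (forall l : R, pos_eig_count (l *: A - B) 2) /\
  (* QSIC = two non-intersecting real lines + two non-intersecting imaginary lines *)
  exists L1 L2 L3 L4 : 'M[complex R]_(2, 4),
    [/\ is_line L1 /\ is_line L2 /\ is_line L3 /\ is_line L4,
        real_line L1 /\ real_line L2,
        ~ real_line L3 /\ ~ real_line L4,
        lines_disjoint L1 L2 /\ lines_disjoint L3 L4 &
        forall X : 'rV[complex R]_4, X != 0 ->
          (on_qsic A B X <->
           [\/ (X <= L1)%MS, (X <= L2)%MS, (X <= L3)%MS | (X <= L4)%MS])].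
Proof.
move=> sA sB _ _ [uA [mu [Imu /= [_ rk _]]]].
have mn := mu_conj_neq Imu.
have [e1 [e2 [h1 h2 i4 [z1 z2 al]]]] := iso_E sA sB uA mn rk.
split; first by move=> l; exact: (index2 l sA sB uA mn h1 h2 i4 z1 z2).
exists (col_mx e1 (cj e1)), (col_mx e2 (cj e2)), (col_mx e1 (cj e2)), (col_mx e2 (cj e1)).
split.
- split; first exact: two_line i4.
  split; first exact: two_line (indep4_p1 i4).
  split; first exact: two_line (indep4_p2 i4).
  exact: two_line (indep4_p3 i4).
- by split; [exact: real_L i4 | exact: real_L (indep4_p1 i4)].
- by split; [exact: nonreal_L i4 | exact: nonreal_L (indep4_p1 i4)].
- by split; [exact: disj i4 | exact: disj (indep4_p2 i4)].
move=> X _; exact: (qsic_lines sA sB uA mn h1 h2 i4 z1 z2 al).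
Qed.
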